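(* Let $(X,c)$ be a finite metric space with $n$ points and let $1\le k\le n$. For every execution of the Reverse Greedy algorithm (with arbitrary tie-breaking), the set $R_k$ it produces satisfies $$\mathrm{cost}(R_k) \;\le\; 2H_{n-k}\cdot \min_{F\subseteq X,\ |F|=k}\mathrm{cost}(F),$$ where $H_m = \sum_{i=1}^m 1/i$ is the $m$-th harmonic number ($H_0=0$). In particular, the approximation ratio of Reverse Greedy for the metric $k$-median problem is $O(\log n)$.
   Context: For $x\in X$ and nonempty $F\subseteq X$, $c_{xF}=\min_{f\in F}c_{xf}$, and $\mathrm{cost}(F)=\sum_{x\in X} c_{xF}$. The Reverse Greedy algorithm on an $n$-point space $X$: set $R_n = X$; for $t = n, n-1,\dots,2$, set $R_{t-1} = R_t\setminus\{r_t\}$ where $r_t\in R_t$ is chosen (ties broken arbitrarily) to minimize $\mathrm{cost}(R_{t-1})$. *)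

(* Defs.v *)
From mathcomp Require Import all_boot all_order all_algebra.
Set Implicit Arguments. Unset Strict Implicit. Unset Printing Implicit Defensive.
Import Order.TTheory GRing.Theory Num.Theory.
Local Open Scope ring_scope.

Definition is_metric {R : realDomainType} {T : finType} (c : T -> T -> R) : Prop :=
  [/\ (forall x y, 0 <= c x y),
      (forall x y, c x y = 0 <-> x = y),
      (forall x y, c x y = c y x)
    & (forall x y z, c x z <= c x y + c y z)].

(* The default value of the iterated min is
   the maximal distance from x, which is >= every c x f for a metric, so for
   nonempty F this is exactly the minimum (only used on nonempty F). *)
Definition distF {R : realDomainType} {T : finType} (c : T -> T -> R)
  (x : T) (F : {set T}) : R :=
  \big[Order.min/ \big[Order.max/0]_(y : T) c x y]_(f in F) c x f.

Definition cost {R : realDomainType} {T : finType} (c : T -> T -> R)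
  (F : {set T}) : R := \sum_(x : T) distF c x F.

Definition harmonic {R : realFieldType} (m : nat) : R :=
  \sum_(1 <= i < m.+1) (i%:R)^-1.

Definition reverse_greedy_run {R : realDomainType} {T : finType}
  (c : T -> T -> R) (Rs : nat -> {set T}) : Prop :=
  Rs #|T| = [set: T] /\
  forall t : nat, (2 <= t <= #|T|)%N ->
    exists2 r, r \in Rs t &
      Rs t.-1 = Rs t :\ r /\
      forall r', r' \in Rs t -> cost c (Rs t :\ r) <= cost c (Rs t :\ r').

(* Main.v *)
Require Import Defs.
From mathcomp Require Import all_boot all_order all_algebra.
From mathcomp Require Import ring lra zify.
Import Order.TTheory GRing.Theory Num.Theory.
Local Open Scope ring_scope.
Set Implicit Arguments.
Section S.
Variables (R : realFieldType) (T : finType) (c : T -> T -> R).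
Lemma distF_le x (F : {set T}) f : f \in F -> distF c x F <= c x f.
Proof. move=> fF; rewrite /distF (bigD1 f) //=; by rewrite ge_min lexx. Qed.

Lemma distF_att x (F : {set T}) f0 : f0 \in F ->
  exists2 f, f \in F & distF c x F = c x f.
Proof.
move=> f0F.
have : (exists2 f, f \in F & distF c x F = c x f) \/
       distF c x F = \big[Order.max/0]_(y : T) c x y.
  rewrite /distF; apply: (big_ind (fun v => (exists2 f, f \in F & v = c x f) \/
       v = \big[Order.max/0]_(y : T) c x y)).
  - by right.
  - move=> a b Ha Hb; rewrite minEle; by case: ifP.
  - by move=> f fF; left; exists f.
case=> // Hid; exists f0 => //; apply/eqP; rewrite eq_le distF_le //=.
by rewrite Hid le_bigmax.
Qed.

Lemma distF_ge0 x (F : {set T}) : is_metric c -> 0 <= distF c x F.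
Proof.
case=> c0 _ _ _; rewrite /distF; apply: (big_ind (fun v => 0 <= v)) => //.
- by apply: (big_ind (fun v => 0 <= v)) => // a b; rewrite le_max => ->.
- by move=> a b; rewrite minEle; case: ifP.
Qed.

Lemma distF_mono x (A B : {set T}) a : a \in A -> A \subset B ->
  distF c x B <= distF c x A.
Proof.
move=> aA sAB; have [f fA ->] := distF_att x aA.
by apply: distF_le; apply: (subsetP sAB).
Qed.

Lemma cost_setT : is_metric c -> cost c [set: T] = 0.
Proof.
move=> Hm; rewrite /cost big1 // => x _; apply/eqP; rewrite eq_le distF_ge0 //.
case: Hm => _ cid _ _.
by rewrite (le_trans (distF_le x (in_setT x))) // (proj2 (cid x x)).
Qed.

Lemma step (S F : {set T}) r0 : is_metric c -> r0 \in S ->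
 (forall r, r \in S -> cost c (S :\ r0) <= cost c (S :\ r)) ->
 (0 < #|F|)%N -> (#|F| < #|S|)%N ->
 (#|S| - #|F|)%:R * (cost c (S :\ r0) - cost c S) <= 2 * cost c F.
Proof.
move=> Hm r0S Hmin /card_gt0P [f0 f0F] ltFS.
have Hm' := Hm; case: Hm' => c0 cid csym ctri.
have [sx Hsx] : exists sx : T -> T, forall x, sx x \in S /\ distF c x S = c x (sx x).
  apply: (@fin_all_exists _ (fun=> T) (fun x y => y \in S /\ distF c x S = c x y)) => x; have [f fS e] := distF_att x r0S; by exists f.
have [fx Hfx] : exists fx : T -> T, forall x, fx x \in F /\ distF c x F = c x (fx x).
  apply: (@fin_all_exists _ (fun=> T) (fun x y => y \in F /\ distF c x F = c x y)) => x; have [f fS e] := distF_att x f0F; by exists f.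
pose D := S :\: sx @: F.
have sub : sx @: F \subset S by apply/subsetP => y /imsetP [f _ ->]; case: (Hsx f).
have cardD : (#|S| - #|F| <= #|D|)%N.
  by rewrite /D cardsDS // leq_sub2l // leq_imset_card.
have key1 x r : sx x != r -> distF c x (S :\ r) - distF c x S <= 0.
  move=> ne; rewrite subr_le0; case: (Hsx x) => sS ->; apply: distF_le.
  by rewrite !inE ne sS.
have key2 x r : r \in D -> sx x = r -> distF c x (S :\ r) - distF c x S <= 2 * distF c x F.
  move=> rD exr; have [xS ex] := Hsx x; have [xF efx] := Hfx x.
  have [yS ey] := Hsx (fx x).
  have yne : sx (fx x) != r.
    apply/eqP => eq; move: rD; rewrite /D !inE -eq.
    by rewrite imset_f // andbF.
  have h1 : distF c x (S :\ r) <= c x (sx (fx x)) by apply: distF_le; rewrite !inE yne.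
  have h2 := ctri x (fx x) (sx (fx x)).
  have h3 : c (fx x) (sx (fx x)) <= c (fx x) r by rewrite -ey; apply: distF_le; rewrite -exr.
  have h4 := ctri (fx x) x r.
  have h5 := csym (fx x) x.
  rewrite -exr in h3 h4 h1 |- *; rewrite ex efx; lra.
have sumx x : \sum_(r in D) (distF c x (S :\ r) - distF c x S) <= 2 * distF c x F.
  have dF0 := distF_ge0 x F Hm.
  case H: (sx x \in D).
    rewrite (bigD1 (sx x)) //= -[X in _ <= X]addr0 lerD //; first exact: key2.
    by apply: sumr_le0 => r /andP [_ ne]; apply: key1; rewrite eq_sym.
  rewrite (le_trans _ (_ : 0 <= _)) ?mulr_ge0 //.
  apply: sumr_le0 => r rD; apply: key1; apply/eqP => e; by rewrite e rD in H.
have Hsum : \sum_(r in D) (cost c (S :\ r) - cost c S) <= 2 * cost c F.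
  rewrite /cost.
  under eq_bigr do rewrite -sumrB.
  rewrite exchange_big /= mulr_sumr; apply: ler_sum => x _; exact: sumx.
have delta0 : 0 <= cost c (S :\ r0) - cost c S.
  rewrite subr_ge0 /cost; apply: ler_sum => x _.
  have : (0 < #|S :\ r0|)%N.
    have F0 : (0 < #|F|)%N by apply/card_gt0P; exists f0.
    by move: (cardsD1 r0 S); rewrite r0S /=; move: ltFS F0; lia.
  case/card_gt0P => a aS; apply: (distF_mono x aS); exact: subsetDl.
apply: le_trans Hsum.
apply: (@le_trans _ _ (\sum_(r in D) (cost c (S :\ r0) - cost c S))).
  by rewrite sumr_const -[_ *+ #|D|]mulr_natl; apply: (ler_wpM2r delta0); rewrite ler_nat.
by apply: ler_sum => r; rewrite /D !inE => /andP [_ rS]; rewrite lerD2r Hmin.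
Qed.
End S.

Lemma harmonicS (R : realFieldType) m : harmonic (R := R) m.+1 = harmonic m + (m.+1)%:R^-1.
Proof. by rewrite /harmonic big_nat_recr. Qed.

Unset Implicit Arguments.
Theorem mainTheorem4 (R : realFieldType) (T : finType) (c : T -> T -> R)
  (Rs : nat -> {set T}) (k : nat) :
  is_metric c ->
  reverse_greedy_run c Rs ->
  (1 <= k <= #|T|)%N ->
  forall F : {set T}, #|F| = k ->
    cost c (Rs k) <= 2 * harmonic (#|T| - k) * cost c F.
Proof.
move=> Hm [RsT Hrun] /andP [k1 kn] F cF.
set n := #|T| in kn RsT Hrun *.
have card : forall j : nat, (j < n)%N -> #|Rs (n - j)%N| = (n - j)%N.
  elim=> [|j IH] jn; first by rewrite subn0 RsT cardsT.
  have t2 : (2 <= n - j <= n)%N by apply/andP; split; lia.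
  have [r rS [e _]] := Hrun _ t2.
  have -> : ((n - j.+1)%N = (n - j)%N.-1) by lia.
  rewrite e; move: (cardsD1 r (Rs (n - j)%N)); rewrite rS IH; [lia | lia].
have bnd : forall j : nat, (j <= n - k)%N ->
    cost c (Rs (n - j)%N) <= 2 * (harmonic (n - k)%N - harmonic (n - k - j)%N) * cost c F.
  elim=> [|j IH] jn.
    by rewrite subn0 RsT cost_setT // subn0 subrr mulr0 mul0r.
  have t2 : (2 <= n - j <= n)%N by apply/andP; split; lia.
  have [r rS [e Hmin]] := Hrun _ t2.
  have jn' : (j < n)%N by lia.
  have cS := card j jn'.
  have F0 : (0 < #|F|)%N by rewrite cF.
  have FS : (#|F| < #|Rs (n - j)%N|)%N by rewrite cF cS; lia.
  have Hs := @step _ _ c (Rs (n - j)%N) F r Hm rS Hmin F0 FS.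
  have -> : ((n - j.+1)%N = (n - j)%N.-1) by lia.
  have jk : (j <= n - k)%N by lia.
  rewrite e; move: (IH jk) Hs.
  have -> : ((n - k - j)%N = (n - k - j.+1)%N.+1) by lia.
  rewrite harmonicS cS cF.
  have -> : ((n - j - k)%N = (n - k - j.+1)%N.+1) by lia.
  set m := (n - k - j.+1)%N.+1.
  set C := cost c F; set a := cost c _; set b := cost c _.
  set H1 := harmonic _; set H2 := harmonic _.
  move=> IH' Hs.
  have mpos : 0 < m%:R :> R by rewrite ltr0n.
  have Hd : b - a <= 2 * C * m%:R^-1.
    rewrite -(mulKf (lt0r_neq0 mpos) (b - a)) mulrC.
    have mi : 0 <= m%:R^-1 :> R by rewrite invr_ge0 ltW.
    exact: (ler_wpM2r mi Hs).
  move: IH' Hd; rewrite !mulrBr !mulrBl !mulrDr !mulrDl; lra.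
have := bnd (n - k)%N (leqnn _).
have -> : ((n - (n - k))%N = k) by lia.
have H0 : harmonic (R := R) 0 = 0 by rewrite /harmonic big_geq.
by rewrite subnn H0 subr0.
Qed.
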